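(* Let $\sigma=\sigma^0\sigma^1\sigma^2\in\{+,-\}^3$ and let $\sigma_r=\sigma^2\sigma^1\sigma^0$ be its reverse. For every integer $n\geq 1$, $L_3^*(n;\sigma)=L_3^*(n;\sigma_r)$.
   Context: A word of length $m$ on $k$ letters is $s=s_1\cdots s_m$ with $s_j\in\{0,\dots,k-1\}$; primitive means not of the form $q^r$ (concatenation of $r$ copies of $q$) with $r>1$. Necklaces are equivalence classes of words under cyclic rotation, primitive if their representatives are. $L_k(m)$ is the number of primitive necklaces of length $m$ on $k$ letters. For $\sigma\in\{+,-\}^k$ let $T_\sigma^-=\{i:\sigma^i=-\}$ and $o_\sigma(s)=|\{j:s_j\in T_\sigma^-\}|$. $L_k(m;\sigma)$ is the number of primitive necklaces of length $m$ on $k$ letters whose representatives $s$ have $o_\sigma(s)$ odd, with $L_k(m;\sigma)=0$ if $m$ is not an integer, and $L_k^*(n;\sigma)=L_k(n)+L_k(\tfrac n2;\sigma)$. *)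

(* Defs.v *)
From mathcomp Require Import all_boot.
Unset Printing Implicit Defensive.

(* s is primitive iff it is NOT of the form q^r (r copies of q) with r > 1.
   The exponent r is bounded by size s + 2 and q must then have length
   size s %/ r; these bounds lose nothing (if s = q^r with r > 1 and s
   nonempty, then r <= size s and size q = size s %/ r; if s is empty,
   r = 2 and q = [::] witness it). *)
Definition primitiveb (k : nat) (s : seq 'I_k) : bool :=
  ~~ [exists r : 'I_(size s).+3,
        exists q : (size s %/ r).-tuple 'I_k,
          (1 < r) && (s == flatten (nseq r (val q)))].

Definition necklace (k m : nat) (s : m.-tuple 'I_k) : {set m.-tuple 'I_k} :=
  [set t : m.-tuple 'I_k | [exists i : 'I_m.+1, val t == rot i (val s)]].

Definition Lnum (k m : nat) : nat :=
  #|[set necklace k m s | s : m.-tuple 'I_k & primitiveb k (val s)]|.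

Inductive sgn := Plus | Minus.

Definition isMinus (x : sgn) : bool := if x is Minus then true else false.

Definition o_sigma (k : nat) (sigma : 'I_k -> sgn) (s : seq 'I_k) : nat :=
  count (fun a => isMinus (sigma a)) s.

Definition Lsig (k m : nat) (sigma : 'I_k -> sgn) : nat :=
  #|[set necklace k m s | s : m.-tuple 'I_k &
        primitiveb k (val s) && odd (o_sigma k sigma (val s))]|.

Definition Lstar (k n : nat) (sigma : 'I_k -> sgn) : nat :=
  Lnum k n + (if odd n then 0 else Lsig k n./2 sigma).

(* Main.v *)
Require Import Defs.
From mathcomp Require Import all_boot.

Section Aux.
Variable k : nat.
Variable f : 'I_k -> 'I_k.
Hypothesis ff : involutive f.

Lemma nonprimE (s : seq 'I_k) :
  ~~ primitiveb k s <-> exists r (q : seq 'I_k), 1 < r /\ s = flatten (nseq r q).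
Proof.
rewrite /primitiveb negbK; split.
  case/existsP=> r /existsP [q /andP [Hr /eqP ->]].
  by exists r, (val q).
case=> r [q [Hr Hs]].
have Hsz : size s = r * size q by rewrite Hs size_flatten /shape map_nseq sumn_nseq mulnC.
case: (posnP (size q)) => Hq.
  have -> : s = [::] by apply/nilP; rewrite /nilp Hsz Hq muln0.
  apply/existsP; exists (inord 2); apply/existsP.
  have E : (size ([::] : seq 'I_k) %/ (@inord (size ([::] : seq 'I_k)).+2 2)) = 0.
    by rewrite /= div0n.
  exists (tcast (esym E) [tuple]).
  set q0 := tcast _ _.
  have -> : val q0 = [::] by apply: size0nil; rewrite size_tuple E.
  have fn : forall n, flatten (nseq n ([::] : seq 'I_k)) = [::] by elim=> //.
  by rewrite fn eqxx andbT inordK.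
have Hrs : r < (size s).+3.
  by rewrite Hsz ltnS; apply: leq_trans (leqnSn _); apply: leq_trans (leqnSn _); rewrite leq_pmulr.
apply/existsP; exists (Ordinal Hrs); apply/existsP.
have E : size q = size s %/ (Ordinal Hrs).
  by rewrite /= Hsz mulKn // ltnW.
exists (tcast E (in_tuple q)).
by rewrite /= Hr val_tcast /= Hs.
Qed.

Lemma prim_map (s : seq 'I_k) : primitiveb k (map f s) = primitiveb k s.
Proof.
have H : forall s, ~~ primitiveb k (map f s) -> ~~ primitiveb k s.
  move=> t /nonprimE [r [q [Hr Hs]]]; apply/nonprimE; exists r, (map f q); split=> //.
  by rewrite -map_nseq -map_flatten -Hs -map_comp map_id_in // => x _; exact: ff.
apply/idP/idP; apply: contraLR => Hn.
  by apply: H; rewrite -map_comp map_id_in // => x _; exact: ff.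
by apply: H.
Qed.

Lemma o_map (sig : 'I_k -> sgn) (s : seq 'I_k) :
  o_sigma k (fun i => sig (f i)) (map f s) = o_sigma k sig s.
Proof. by rewrite /o_sigma count_map; apply: eq_count => a /=; rewrite ff. Qed.

Variable m : nat.
Definition F (s : m.-tuple 'I_k) : m.-tuple 'I_k := map_tuple f s.

Lemma FK : involutive F.
Proof. by move=> s; apply: val_inj; rewrite /= -map_comp map_id_in // => x _; exact: ff. Qed.

Lemma neck_map (s : m.-tuple 'I_k) : necklace k m (F s) = F @: necklace k m s.
Proof.
apply/setP=> t; rewrite inE; apply/existsP/imsetP.
  case=> i /eqP Ht; exists (F t); last by rewrite FK.
  rewrite inE; apply/existsP; exists i; apply/eqP.
  by rewrite /= Ht map_rot -map_comp map_id_in // => x _; exact: ff.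
case=> u; rewrite inE => /existsP [i /eqP Hu] ->; exists i.
by rewrite /= Hu map_rot.
Qed.

Lemma Lsig_map (sig : 'I_k -> sgn) :
  Lsig k m (fun i => sig (f i)) = Lsig k m sig.
Proof.
rewrite /Lsig.
set S := [set necklace k m s | s : m.-tuple 'I_k &
     primitiveb k s && odd (o_sigma k sig s)].
have -> : [set necklace k m s | s : m.-tuple 'I_k &
     primitiveb k s && odd (o_sigma k (fun i => sig (f i)) s)]
   = (fun A : {set m.-tuple 'I_k} => F @: A) @: S.
  apply/setP=> X; apply/imsetP/imsetP.
    case=> s; rewrite inE => Hs ->; exists (necklace k m (F s)).
      apply/imsetP; exists (F s) => //; rewrite inE.
      by move: Hs; rewrite -{1 2}(FK s) /= prim_map o_map.
    by rewrite neck_map -imset_comp; under eq_imset do rewrite /= FK; rewrite imset_id.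
  case=> Y /imsetP [s]; rewrite inE => Hs -> ->; exists (F s).
    by rewrite inE /= prim_map o_map.
  by rewrite neck_map.
rewrite card_imset //; apply: imset_inj; exact: (can_inj FK).
Qed.
End Aux.

Theorem lemma2p3 (sigma : 'I_3 -> sgn) (n : nat) :
  1 <= n -> Lstar 3 n sigma = Lstar 3 n (fun i : 'I_3 => sigma (rev_ord i)).
Proof.
move=> _; rewrite /Lstar; case: odd => //.
by rewrite (@Lsig_map 3 (@rev_ord 3) (@rev_ordK 3)).
Qed.
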